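(* Let $\mathcal{C}=\{C_1,\dots,C_m\}$ be a random 3XOR instance with $n$ variables and $m=cn$ equations, where $c\ge 10^{10}$. Then with probability $1-o(1)$, $\mathrm{GI}(G_{\mathcal{C}},G_{\mathcal{C}^0})<1-\frac{1}{95c^2}$.
   Context: A random 3XOR instance with $n$ variables and $m$ equations: choose $m$ unordered triples of distinct variables from the $\binom{n}{3}$ possible ones (uniformly at random) and make each triple $(x_{j_1},x_{j_2},x_{j_3})$ into an equation $x_{j_1}+x_{j_2}+x_{j_3}=b$ over $\mathbb{Z}_2$ with independent uniform $b$. $\mathcal{C}^0$ is obtained by replacing every right-hand side by $0$. Graph $G_{\mathcal{C}}$: for each variable $x$, two variable vertices $x\mapsto0,x\mapsto1$ joined by an edge; for each equation $C$ on $x_1,x_2,x_3$, four constraint vertices, one per satisfying assignment $(x_1\mapsto a_1,x_2\mapsto a_2,x_3\mapsto a_3)$ of $C$, forming a clique, each adjacent to the variable vertices $x_i\mapsto a_i$; variable vertices are shared across constraints, constraint vertices are not. $\mathrm{GI}(G,H)=\max_\pi\frac{|\{e\in E(G):\pi(e)\in E(H)\}|}{\max\{|E(G)|,|E(H)|\}}$ over bijections $\pi:V(G)\to V(H)$. *)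

(* Defs.v *)
From HB Require Import structures.
From mathcomp Require Import all_boot all_order all_algebra.
From mathcomp Require Import fingroup perm.
From mathcomp Require Import reals.
Set Implicit Arguments. Unset Strict Implicit. Unset Printing Implicit Defensive.
Import Order.TTheory GRing.Theory Num.Theory.
Local Open Scope ring_scope.

Notation Triple n := {t : {set 'I_n} | #|t| == 3%N}.

(* A 3XOR instance with n variables and m equations: the variable triple of
   each equation and its right-hand side. *)
Definition Instance (n m : nat) : finType :=
  ({ffun 'I_m -> Triple n} * {ffun 'I_m -> bool})%type.

(* Vertices of G_C: variable vertices (x |-> a) and, for every equation j, four
   constraint vertices indexed by (a1,a2) : bool * bool; the satisfying
   assignment is (x1|->a1, x2|->a2, x3|->a1+a2+b) where x1<x2<x3 are the
   variables of the equation. *)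
Definition Vtx (n m : nat) : finType :=
  (('I_n * bool) + ('I_m * (bool * bool)))%type.

(* the value assigned to variable x by the satisfying assignment p of
   equation j (meaningful when x belongs to the triple of j) *)
Definition assigned n m (T : {ffun 'I_m -> Triple n}) (b : {ffun 'I_m -> bool})
  (j : 'I_m) (p : bool * bool) (x : 'I_n) : bool :=
  let k := index x (enum (val (T j))) in
  if k == 0%N then p.1 else if k == 1%N then p.2 else addb (addb p.1 p.2) (b j).

Definition var_con n m (T : {ffun 'I_m -> Triple n}) (b : {ffun 'I_m -> bool}) (x : 'I_n) (a : bool) (j : 'I_m) (p : bool * bool) :=
  (x \in val (T j)) && (a == @assigned n m T b j p x).

Definition adjC n m (T : {ffun 'I_m -> Triple n}) (b : {ffun 'I_m -> bool})
  (u v : Vtx n m) : bool :=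
  match u, v with
  | inl (x, a), inl (y, a') => (x == y) && (a != a')
  | inr (j, p), inr (k, q) => (j == k) && (p != q)
  | inl (x, a), inr (j, p) => var_con T b x a j p
  | inr (j, p), inl (x, a) => var_con T b x a j p
  end.

Definition Edges (V : finType) (adj : rel V) : {set {set V}} :=
  [set e : {set V} | [exists u : V, exists v : V, adj u v && (e == [set u; v])]].

Definition GI (R : numFieldType) (V : finType) (adjG adjH : rel V) : R :=
  (\max_(pi : {perm V})
      #|[set e in Edges adjG | (pi @: e) \in Edges adjH]|)%N%:R
  / (maxn #|Edges adjG| #|Edges adjH|)%:R.

Definition GI_inst (R : numFieldType) n m (C : Instance n m) : R :=
  GI R (adjC C.1 C.2) (adjC C.1 [ffun _ => false]).

(* probability of an event under the uniform distribution on instances: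
   triples chosen independently and uniformly, right-hand sides independent
   uniform bits *)
Definition prob n m (E : pred (Instance n m)) (R : numFieldType) : R :=
  #|[set C | E C]|%:R / #|Instance n m|%:R.

(* Main.v *)
Require Import Defs.
From HB Require Import structures.
From mathcomp Require Import all_boot all_order all_algebra.
From mathcomp Require Import reals.
From mathcomp Require Import fingroup perm.
From mathcomp Require Import zify ring lra.
Set Implicit Arguments. Unset Strict Implicit. Unset Printing Implicit Defensive.

Lemma enum3 n (A : {set 'I_n}) : #|A| = 3 ->
  exists y0 y1 y2, enum A = [:: y0; y1; y2] /\ [&& y0 != y1, y0 != y2 & y1 != y2].
Proof.
move=> hA; have := enum_uniq (pred_of_set A); rewrite cardE in hA.
case: (enum A) hA => [|y0 [|y1 [|y2 [|]]]] //= _.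
rewrite !inE !negb_or !andbT => /andP [/andP [h1 h2] h3].
by exists y0, y1, y2; split => //; rewrite h1 h2 h3.
Qed.

Section Asg.
Variables (n m : nat) (T : {ffun 'I_m -> Triple n}) (b : {ffun 'I_m -> bool}) (j : 'I_m).

Lemma asg_exist (x0 : 'I_n) : x0 \in val (T j) ->
  exists p, forall x, x \in val (T j) ->
    assigned T b j p x = (x == x0) && b j.
Proof.
move=> hx0; have := enum3 (eqP (valP (T j))) => [[y0 [y1 [y2 [he hd]]]]].
move: hx0; rewrite -mem_enum he !inE => hx0.
case/and3P: hd => d01 d02 d12.
have i0 : index y0 (enum (val (T j))) = 0 by rewrite he /= eqxx.
have i1 : index y1 (enum (val (T j))) = 1 by rewrite he /= (negbTE d01) eqxx.
have i2 : index y2 (enum (val (T j))) = 2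
  by rewrite he /= (negbTE d02) (negbTE d12) eqxx.
have hx : forall x, x \in val (T j) -> [\/ x = y0, x = y1 | x = y2].
  by move=> x; rewrite -mem_enum he !inE => /or3P [] /eqP ->; constructor.
have d10 : y1 != y0 by rewrite eq_sym.
have d20 : y2 != y0 by rewrite eq_sym.
have d21 : y2 != y1 by rewrite eq_sym.
case/or3P: hx0 => /eqP ->;
 [exists (b j, false) | exists (false, b j) | exists (false, false)] => x /hx [] ->;
 rewrite /assigned ?i0 ?i1 ?i2 /= ?eqxx ?(negbTE d01, negbTE d02, negbTE d12, negbTE d10, negbTE d20, negbTE d21) /=;
 by case: (b j).
Qed.

Lemma asg_any (x : 'I_n) a : x \in val (T j) -> exists p, assigned T b j p x = a.
Proof.
move=> hx; have := enum3 (eqP (valP (T j))) => [[y0 [y1 [y2 [he hd]]]]].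
case/and3P: hd => d01 d02 d12.
have i0 : index y0 (enum (val (T j))) = 0 by rewrite he /= eqxx.
have i1 : index y1 (enum (val (T j))) = 1 by rewrite he /= (negbTE d01) eqxx.
have i2 : index y2 (enum (val (T j))) = 2
  by rewrite he /= (negbTE d02) (negbTE d12) eqxx.
move: hx; rewrite -mem_enum he !inE => /or3P [] /eqP ->.
- by exists (a, false); rewrite /assigned i0.
- by exists (false, a); rewrite /assigned i1.
- by exists (addb a (b j), false); rewrite /assigned i2 /= addbF -addbA addbb addbF.
Qed.

Lemma asg_par p : \big[addb/false]_(x in val (T j)) assigned T b j p x = b j.
Proof.
have := enum3 (eqP (valP (T j))) => [[y0 [y1 [y2 [he hd]]]]].
case/and3P: hd => d01 d02 d12.
have i0 : index y0 (enum (val (T j))) = 0 by rewrite he /= eqxx.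
have i1 : index y1 (enum (val (T j))) = 1 by rewrite he /= (negbTE d01) eqxx.
have i2 : index y2 (enum (val (T j))) = 2
  by rewrite he /= (negbTE d02) (negbTE d12) eqxx.
rewrite -big_enum he !big_cons big_nil /assigned i0 i1 i2 /=.
by case: p => [[] []]; case: (b j).
Qed.
End Asg.

Definition isL (A B : Type) (u : A + B) := if u is inl _ then true else false.

Section Graph.
Variables (n m : nat) (T : {ffun 'I_m -> Triple n}) (b : {ffun 'I_m -> bool}).
Notation V := (Vtx n m).
Notation adj := (@adjC n m T b).

Lemma adj_sym (u v : V) : adj u v = adj v u.
Proof.
case: u => [[x a]|[j p]]; case: v => [[y a']|[k q]] //=.
- by rewrite [y == x]eq_sym [a' == a]eq_sym.
- by rewrite [k == j]eq_sym [q == p]eq_sym.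
Qed.

Lemma adj_irr (u : V) : adj u u = false.
Proof. by case: u => [[x a]|[j p]] /=; rewrite !eqxx. Qed.

Lemma set2_eq (W : finType) (u v u' v' : W) : [set u; v] = [set u'; v'] ->
  (u = u' /\ v = v') \/ (u = v' /\ v = u').
Proof.
move=> e.
have hu : u \in [set u'; v'] by rewrite -e !inE eqxx.
have hv : v \in [set u'; v'] by rewrite -e !inE eqxx orbT.
have hu' : u' \in [set u; v] by rewrite e !inE eqxx.
have hv' : v' \in [set u; v] by rewrite e !inE eqxx orbT.
move: hu hv hu' hv'; rewrite !inE.
case/orP=> /eqP hu; case/orP=> /eqP hv; subst => //; try by [left | right].
- by move=> _ /orP [] /eqP ->; [left|right].
- by move=> /orP [] /eqP ->; [left|right].
Qed.

Lemma inEdges (u v : V) : ([set u; v] \in Edges adj) = adj u v.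
Proof.
rewrite /Edges inE; apply/existsP/idP => [[u' /existsP [v' /andP [h /eqP e]]]|h].
- case: (set2_eq e) => [[-> ->] | [-> ->]] //; by rewrite adj_sym.
- by exists u; apply/existsP; exists v; rewrite h eqxx.
Qed.

Lemma inEdgesP (e : {set V}) : e \in Edges adj -> exists u v, e = [set u; v] /\ adj u v.
Proof.
rewrite /Edges inE => /existsP [u /existsP [v /andP [h /eqP ->]]].
by exists u, v.
Qed.

Definition nbl (u : V) : seq V :=
  match u with
  | inr (j, p) => [seq inl (y, assigned T b j p y) | y <- enum (val (T j))] ++
                  [seq inr (j, q) | q <- [:: (false,false); (false,true); (true,false); (true,true)]]
  | inl _ => [::]
  end.

Lemma nbl_size u : size (nbl u) <= 7.
Proof.
case: u => [//|[j p]] /=; rewrite size_cat !size_map /=.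
by rewrite -cardE (eqP (valP (T j))).
Qed.

Lemma nbl_mem j p (v : V) : adj (inr (j, p)) v -> v \in nbl (inr (j, p)).
Proof.
rewrite /nbl mem_cat; case: v => [[y a]|[k q]] /=.
- rewrite /var_con => /andP [hy /eqP ->]; apply/orP; left.
  by apply/mapP; exists y; rewrite ?mem_enum.
- move=> /andP [/eqP <- _]; apply/orP; right.
  by case: q => [[] []]; rewrite !inE ?eqxx ?orbT.
Qed.

Lemma nbl_nth j p (v : V) : adj (inr (j, p)) v ->
  exists k : 'I_7, forall d, nth d (nbl (inr (j, p))) k = v.
Proof.
move=> h; have hm := nbl_mem h.
have hs : index v (nbl (inr (j, p))) < 7.
  by apply: leq_trans (nbl_size (inr (j, p))); rewrite index_mem.
exists (Ordinal hs) => d /=; rewrite (set_nth_default v); last by rewrite index_mem.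
exact: nth_index.
Qed.

Lemma card_edges : #|Edges adj| <= 2 * n + 28 * m.
Proof.
pose P := [set uv : V * V | adj uv.1 uv.2 && (~~ isL uv.1 || isL uv.2)].
have h1 : Edges adj \subset [set [set uv.1; uv.2] | uv in P].
  apply/subsetP => e /inEdgesP [u [v [-> h]]].
  case hu: (isL u); case hv: (isL v).
  - by apply/imsetP; exists (u, v); [by rewrite inE /= h hv orbT | ].
  - apply/imsetP; exists (v, u); [by rewrite inE /= -adj_sym h hu orbT | ].
    by apply/setP => z; rewrite /= !inE orbC.
  - by apply/imsetP; exists (u, v); [by rewrite inE /= h hu | ].
  - by apply/imsetP; exists (u, v); [by rewrite inE /= h hu | ].
pose g1 (w : ('I_m * (bool * bool)) * 'I_7) : V * V :=
  (inr w.1, nth (inr w.1) (nbl (inr w.1)) w.2).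
pose g2 (xa : 'I_n * bool) : V * V := (inl xa, inl (xa.1, ~~ xa.2)).
have h2 : P \subset [set g1 w | w in setT] :|: [set g2 w | w in setT].
  apply/subsetP => -[u v]; rewrite inE /= => /andP [h].
  case: u h => [[x a]|[j p]] h.
  - case: v h => [[y a']|//] /= /andP [/eqP <- ha] _.
    apply/setUP; right; apply/imsetP; exists (x, a); first by rewrite in_setT.
    by rewrite /g2 /=; case: a a' ha => [] [].
  - move=> _; apply/setUP; left; have [k hk] := nbl_nth h.
    by apply/imsetP; exists ((j, p), k); [rewrite in_setT | rewrite /g1 /= hk].
apply: leq_trans (subset_leq_card h1) _.
apply: leq_trans (leq_imset_card _ _) _.
apply: leq_trans (subset_leq_card h2) _.
apply: leq_trans (leq_card_setU _ _) _.
rewrite addnC; apply: leq_add.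
- apply: leq_trans (leq_imset_card _ _) _.
  by rewrite cardsT !card_prod !card_ord card_bool mulnC.
- apply: leq_trans (leq_imset_card _ _) _.
  by rewrite cardsT !card_prod !card_ord card_bool -mulnA mulnC.
Qed.

End Graph.

Definition failE n (sg : {ffun 'I_n -> bool}) (S : {set 'I_n}) (t : Triple n) (be : bool) :=
  (\big[addb/false]_(x in val t) sg x == be) || (val t \subset S).

Section Det.
Variables (n m : nat) (T : {ffun 'I_m -> Triple n}) (b : {ffun 'I_m -> bool}).
Notation V := (Vtx n m).
Notation G := (@adjC n m T b).
Notation H := (@adjC n m T [ffun _ => false]).
Variable pi : {perm V}.

Definition Lam := [set e in Edges G | pi @: e \notin Edges H].

Lemma imset2 (u v : V) : pi @: [set u; v] = [set pi u; pi v].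
Proof. by rewrite imsetU1 imset_set1. Qed.

Definition sgm : {ffun 'I_n -> bool} :=
  [ffun x => if pi (inl (x, false)) is inl (_, s) then s else false].
Definition Sx : {set 'I_n} := [set x | ~~ H (pi (inl (x, false))) (pi (inl (x, true)))].

Lemma card_Sx : #|Sx| <= #|Lam|.
Proof.
pose f (x : 'I_n) : {set V} := [set inl (x, false); inl (x, true)].
have finj : injective f.
  move=> x y /set2_eq [] [e _]; by case: e.
rewrite -(card_imset _ finj); apply: subset_leq_card; apply/subsetP => e.
case/imsetP => x; rewrite inE => hx ->; rewrite inE /f imset2 !inEdges.
by rewrite /= eqxx hx.
Qed.

Definition W1 := [set vu : V * V | [&& isL vu.1, ~~ isL vu.2, G vu.1 vu.2 &
                                   ~~ H (pi vu.1) (pi vu.2)]].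
Definition W2 := [set vu : V * V | [&& isL vu.1, ~~ isL (pi vu.1) &
                                   H (pi vu.1) (pi vu.2)]].

Lemma card_W1 : #|W1| <= #|Lam|.
Proof.
pose f (vu : V * V) : {set V} := [set vu.1; vu.2].
have finj : {in W1 &, injective f}.
  move=> [v u] [v' u']; rewrite !inE /= /f => /and4P [h1 h2 _ _] /and4P [h1' h2' _ _].
  move=> /set2_eq /= [[-> ->] // | [e1 e2]].
  by move: h1 h2'; rewrite e1; clear e1 e2; case: u'.
rewrite -(card_in_imset finj); apply: subset_leq_card; apply/subsetP => e.
case/imsetP => -[v u]; rewrite inE /= => /and4P [_ _ hG hH] ->.
by rewrite inE /f /= imset2 !inEdges hG hH.
Qed.

Lemma card_W2 : #|W2| <= 14 * n.
Proof.
pose h (w : ('I_n * bool) * 'I_7) : V * V :=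
  (inl w.1, (pi^-1)%g (nth (inl w.1) (nbl T [ffun _ => false] (pi (inl w.1))) w.2)).
have hs : W2 \subset [set h w | w in setT].
  apply/subsetP => -[v u]; rewrite inE /= => /and3P [].
  case: v => [xa|//] _; case e: (pi (inl xa)) => [//|[j p]] _ hH.
  have [k hk] := nbl_nth hH.
  apply/imsetP; exists (xa, k); first by rewrite in_setT.
  by rewrite /h /= e hk permK.
apply: leq_trans (subset_leq_card hs) _.
apply: leq_trans (leq_imset_card _ _) _.
by rewrite cardsT !card_prod !card_ord card_bool; lia.
Qed.

Definition jof (u : V) : option 'I_m := if u is inr (j, _) then Some j else None.

Lemma core (j : 'I_m) :
  (forall p x, x \in val (T j) ->
     isL (pi (inl (x, assigned T b j p x))) &&
     H (pi (inl (x, assigned T b j p x))) (pi (inr (j, p)))) ->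
  failE sgm Sx (T j) (b j).
Proof.
move=> hyp; rewrite /failE.
case: (boolP (val (T j) \subset Sx)) => hS; first by rewrite orbT.
rewrite orbF.
have /subsetPn [x0 hx0 hnS] := hS.
have [p hp] := asg_exist b hx0.
pose ax x := (x == x0) && b j.
pose phi x := if pi (inl (x, ax x)) is inl (y, _) then y else x.
pose s x := if pi (inl (x, ax x)) is inl (_, c) then c else false.
have fA : forall x, x \in val (T j) -> pi (inl (x, ax x)) = inl (phi x, s x).
  move=> x hx; have := hyp p x hx; rewrite hp // /phi /s.
  by case: (pi (inl (x, ax x))) => [[y c]|].
have fH : forall x, x \in val (T j) -> H (inl (phi x, s x)) (pi (inr (j, p))).
  by move=> x hx; have := hyp p x hx; rewrite hp // fA // => /andP [].
have [y0 [y1 [y2 [he hd]]]] := enum3 (eqP (valP (T j))).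
case/and3P: hd => d01 _ _.
have hy0 : y0 \in val (T j) by rewrite -mem_enum he inE eqxx.
have hy1 : y1 \in val (T j) by rewrite -mem_enum he !inE eqxx orbT.
case eu: (pi (inr (j, p))) => [[z c]|[j' q]].
  exfalso.
  have := fH _ hy0; have := fH _ hy1; rewrite eu /=.
  move=> /andP [/eqP e1 c1] /andP [/eqP e0 c0].
  have es : s y0 = s y1 by move: c0 c1; case: (s y0); case: (s y1); case: (c).
  have := fA _ hy0; rewrite e0 -e1 es -(fA _ hy1) => /perm_inj [e _].
  by move: d01; rewrite e eqxx.
have fH' : forall x, x \in val (T j) ->
    (phi x \in val (T j')) && (s x == assigned T [ffun _ => false] j' q (phi x)).
  by move=> x hx; have := fH _ hx; rewrite eu.
have phinj : {in val (T j) &, injective phi}.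
  move=> x1 x2 h1 h2 e.
  have e' : s x1 = s x2.
    by have := fH' _ h1; have := fH' _ h2; rewrite e => /andP [_ /eqP ->] /andP [_ /eqP ->].
  by have := fA _ h1; rewrite e e' -(fA _ h2) => /perm_inj [].
have phiim : phi @: val (T j) = val (T j').
  apply/eqP; rewrite eqEcard; apply/andP; split.
    by apply/subsetP => y /imsetP [x hx ->]; case/andP: (fH' _ hx).
  by rewrite (card_in_imset phinj) (eqP (valP (T j))) (eqP (valP (T j'))).
have hpar := asg_par T [ffun _ => false] j' q.
rewrite -phiim big_imset // ffunE in hpar.
have hs : forall x, x \in val (T j) -> s x = addb (sgm x) (ax x).
  move=> x hx; case: (boolP (ax x)) => hax.
  - have ex : x = x0 by move: hax; rewrite /ax => /andP [/eqP].
    subst x.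
    have [p' hp'] := asg_any b false hx0.
    have := hyp p' x0 hx0; rewrite hp' => /andP [hl _].
    move: hnS; rewrite inE negbK.
    have e1 : pi (inl (x0, true)) = inl (phi x0, s x0) by rewrite -fA // hax.
    rewrite e1 /sgm ffunE; move: hl.
    case: (pi (inl (x0, false))) => [[y' c']|//] _ /= /andP [_].
    by case: (s x0); case: c'.
  - rewrite addbF /sgm ffunE.
    have := fA _ hx; rewrite (negbTE hax) => ->; done.
have e2 : \big[addb/false]_(x in val (T j)) assigned T [ffun _ => false] j' q (phi x)
    = \big[addb/false]_(x in val (T j)) addb (sgm x) (ax x).
  by apply: eq_bigr => x hx; case/andP: (fH' x hx) => _ /eqP <-; exact: hs.
rewrite e2 big_split /= in hpar.
have e3 : \big[addb/false]_(x in val (T j)) ax x = b j.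
  rewrite (bigD1 x0) //= /ax eqxx /= big1 ?addbF // => x /andP [_ hx].
  by rewrite (negbTE hx).
rewrite e3 in hpar.
by move: hpar; case: (\big[addb/false]_(x in val (T j)) sgm x); case: (b j).
Qed.
Lemma det_bound : #|[set j | ~~ failE sgm Sx (T j) (b j)]| <= #|Lam| + 14 * n.
Proof.
set Bad := [set j | _].
have hsub : [set Some j | j in Bad] \subset [set jof vu.2 | vu in W1 :|: W2].
  apply/subsetP => oj /imsetP [j]; rewrite inE => hj ->.
  case: (boolP [exists p, exists x, (x \in val (T j)) &&
      ((inl (x, assigned T b j p x), inr (j, p)) \in W1 :|: W2)]).
  - case/existsP => p /existsP [x /andP [_ hw]].
    by apply/imsetP; exists (inl (x, assigned T b j p x), inr (j, p)).
  - move=> hn; exfalso; move: hj; apply/negP; rewrite negbK; apply: core => p x hx.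
    have : ~~ ((inl (x, assigned T b j p x), inr (j, p)) \in W1 :|: W2).
      apply: contra hn => hw; apply/existsP; exists p; apply/existsP; exists x.
      by rewrite hx hw.
    rewrite !inE /= /var_con hx eqxx /= negb_or => /andP [h1 h2].
    rewrite negbK in h1; rewrite h1 andbT.
    by move: h2; rewrite h1 andbT negbK.
have : #|Bad| <= #|W1 :|: W2|.
  rewrite -(card_imset _ (@Some_inj _)).
  apply: leq_trans (subset_leq_card hsub) _; exact: leq_imset_card.
move/leq_trans; apply; apply: leq_trans (leq_card_setU _ _) _.
apply: leq_add; [exact: card_W1 | exact: card_W2].
Qed.
End Det.

Section Count.
Variables (n m : nat).

Definition failc (sg : {ffun 'I_n -> bool}) (S : {set 'I_n}) (C : Instance n m) :=
  #|[set j | failE sg S (C.1 j) (C.2 j)]|.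
Definition goodc (sg : {ffun 'I_n -> bool}) (S : {set 'I_n}) (C : Instance n m) :=
  #|[set j | ~~ failE sg S (C.1 j) (C.2 j)]|.
Definition coordc (sg : {ffun 'I_n -> bool}) (S : {set 'I_n}) :=
  \sum_(t : Triple n) \sum_(be : bool) (if failE sg S t be then 2 else 1).

Lemma good_fail sg S C : goodc sg S C + failc sg S C = m.
Proof.
rewrite /goodc /failc addnC.
have -> : [set j | ~~ failE sg S (C.1 j) (C.2 j)] = ~: [set j | failE sg S (C.1 j) (C.2 j)].
  by apply/setP => j; rewrite !inE.
by rewrite cardsC card_ord.
Qed.

Lemma pow_fail sg S C :
  2 ^ failc sg S C = \prod_(j < m) (if failE sg S (C.1 j) (C.2 j) then 2 else 1).
Proof.
rewrite -big_mkcond /= prod_nat_const /failc; congr (2 ^ _).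
by apply: eq_card => j; rewrite inE.
Qed.

Lemma sum_pow sg S : \sum_(C : Instance n m) 2 ^ failc sg S C = coordc sg S ^ m.
Proof.
under eq_bigr do rewrite pow_fail.
rewrite -(pair_bigA _ (fun (T : {ffun 'I_m -> Triple n}) (b : {ffun 'I_m -> bool}) =>
   \prod_(j < m) (if failE sg S ((T, b).1 j) ((T, b).2 j) then 2 else 1))) /=.
under eq_bigr do rewrite -(bigA_distr_bigA (fun j be => if failE sg S (_ j) be then 2 else 1)).
rewrite -(bigA_distr_bigA (fun j t => \sum_(be : bool) if failE sg S t be then 2 else 1)).
by rewrite prod_nat_const card_ord.
Qed.

End Count.

Lemma bin3_small s n : 5 * s <= n -> 100 * 'C(s, 3) <= 'C(n, 3).
Proof.
move=> h.
have e : forall k, 'C(k, 3) * 6 = k * (k - 1) * (k - 2).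
  move=> k; rewrite (bin_ffact k 3) !ffactnSr ffactn0 mul1n; lia.
rewrite -(leq_pmul2r (isT : 0 < 6)) -mulnA !e.
case: (leqP s 2) => hs.
  by case: s h hs => [|[|[|]]].
have h1 : 5 * s <= n by [].
have h2 : 5 * (s - 1) <= n - 1 by lia.
have h3 : 5 * (s - 2) <= n - 2 by lia.
have := leq_mul (leq_mul h1 h2) h3.
apply: leq_trans.
nia.
Qed.

Lemma card_triple n : #|{: Triple n}| = 'C(n, 3).
Proof.
rewrite card_sig; have := card_draws 'I_n 3; rewrite card_ord => <-; apply: eq_card => A.
by rewrite !inE.
Qed.

Lemma card_sub_triple n (S : {set 'I_n}) :
  #|[set t : Triple n | val t \subset S]| <= 'C(#|S|, 3).
Proof.
rewrite -cards_draws -(card_imset _ val_inj); apply: subset_leq_card.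
apply/subsetP => A /imsetP [t ht ->]; rewrite inE in ht.
by rewrite inE ht (valP t).
Qed.

Lemma coord_bound n (sg : {ffun 'I_n -> bool}) (S : {set 'I_n}) :
  5 * #|S| <= n -> 100 * coordc sg S <= 302 * #|{: Triple n}|.
Proof.
move=> hS.
have h1 : coordc sg S <= \sum_(t : Triple n) (3 + 2 * (val t \subset S)).
  apply: leq_sum => t _; rewrite big_bool /failE.
  by case: (val t \subset S); case: (\big[addb/false]_(x in val t) sg x).
have h2 : \sum_(t : Triple n) (3 + 2 * (val t \subset S)) =
          3 * #|{: Triple n}| + 2 * #|[set t : Triple n | val t \subset S]|.
  rewrite big_split /= sum_nat_const -big_distrr /= mulnC.
  congr (_ + 2 * _); rewrite -sum1_card [RHS]big_mkcond /=.
  by apply: eq_bigr => t _; rewrite inE; case: (_ \subset _).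
have h3 := card_sub_triple S.
have h4 := bin3_small hS.
rewrite card_triple in h2 *.
lia.
Qed.

Lemma expn_mono a b e : a <= b -> a ^ e <= b ^ e.
Proof. by case: e => [//|e] h; rewrite leq_exp2r. Qed.

Lemma card_sets n : #|{: {set 'I_n}}| = 2 ^ n.
Proof.
have := card_powerset [set: 'I_n]; rewrite cardsT card_ord => <-.
rewrite -cardsT; apply: eq_card => A; by rewrite !inE subsetT.
Qed.

Section Union.
Variables (n m : nat).
Notation N3 := #|{: Triple n}|.

Lemma fixed_bound (sg : {ffun 'I_n -> bool}) (S : {set 'I_n}) : 5 * #|S| <= n ->
  #|[set C : Instance n m | goodc sg S C <= 15 * n]| * 2 ^ m * 100 ^ m
    <= 2 ^ (15 * n) * (302 * N3) ^ m.
Proof.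
move=> hS.
have h1 : #|[set C : Instance n m | goodc sg S C <= 15 * n]| * 2 ^ m <=
          2 ^ (15 * n) * \sum_(C : Instance n m) 2 ^ failc sg S C.
  rewrite -sum1_card big_distrl /= big_distrr /=.
  apply: leq_trans (_ : \sum_(C in [set C : Instance n m | goodc sg S C <= 15 * n])
                        2 ^ (15 * n) * 2 ^ failc sg S C <= _).
    apply: leq_sum => C; rewrite inE mul1n -expnD => hC.
    rewrite leq_exp2l //; have := good_fail sg S C; lia.
  rewrite [X in _ <= X](bigID (fun C => C \in [set C : Instance n m | goodc sg S C <= 15 * n])) /=.
  exact: leq_addr.
rewrite sum_pow in h1.
have h2 := coord_bound sg hS.
apply: leq_trans (leq_mul h1 (leqnn (100 ^ m))) _.
rewrite -mulnA -expnMn leq_mul2l; apply/orP; right.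
by apply: expn_mono; rewrite mulnC.
Qed.

Definition BadSet := [set C : Instance n m | [exists sg : {ffun 'I_n -> bool},
   exists S : {set 'I_n}, (5 * #|S| <= n) && (goodc sg S C <= 15 * n)]].

Lemma bad_bound : #|BadSet| * 2 ^ m * 100 ^ m <= 2 ^ (17 * n) * (302 * N3) ^ m.
Proof.
pose F (C : Instance n m) := \sum_(sg : {ffun 'I_n -> bool}) \sum_(S : {set 'I_n} | 5 * #|S| <= n)
              ((goodc sg S C <= 15 * n) : nat).
have h1 : #|BadSet| <= \sum_(C : Instance n m) F C.
  rewrite -sum1_card [X in X <= _]big_mkcond /=; apply: leq_sum => C _.
  case: ifP => // hC; move: hC; rewrite inE => /existsP [sg /existsP [S /andP [h1 h2]]].
  rewrite /F (bigD1 sg) //= (bigD1 S) //= h2; lia.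
have h2 : \sum_(C : Instance n m) F C = \sum_(sg : {ffun 'I_n -> bool})
     \sum_(S : {set 'I_n} | 5 * #|S| <= n) #|[set C : Instance n m | goodc sg S C <= 15 * n]|.
  rewrite /F exchange_big /=; apply: eq_bigr => sg _.
  rewrite exchange_big /=; apply: eq_bigr => S _.
  rewrite -sum1_card [RHS]big_mkcond /=; apply: eq_bigr => C _; rewrite inE.
  by case: (_ <= _).
rewrite h2 in h1.
have h3 : \sum_(sg : {ffun 'I_n -> bool}) \sum_(S : {set 'I_n} | 5 * #|S| <= n)
     (#|[set C : Instance n m | goodc sg S C <= 15 * n]| * 2 ^ m * 100 ^ m) <=
     \sum_(sg : {ffun 'I_n -> bool}) \sum_(S : {set 'I_n})
     (2 ^ (15 * n) * (302 * N3) ^ m).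
  apply: leq_sum => sg _; rewrite [X in _ <= X](bigID (fun S : {set 'I_n} => 5 * #|S| <= n)) /=.
  apply: leq_trans (leq_addr _ _); apply: leq_sum => S hS; exact: fixed_bound.
rewrite !sum_nat_const card_ffun card_bool card_ord card_sets in h3.
have e : \sum_(sg : {ffun 'I_n -> bool}) \sum_(S : {set 'I_n} | 5 * #|S| <= n)
     (#|[set C : Instance n m | goodc sg S C <= 15 * n]| * 2 ^ m * 100 ^ m) =
  (\sum_(sg : {ffun 'I_n -> bool}) \sum_(S : {set 'I_n} | 5 * #|S| <= n)
     #|[set C : Instance n m | goodc sg S C <= 15 * n]|) * 2 ^ m * 100 ^ m.
  by rewrite !big_distrl /=; apply: eq_bigr => sg _; rewrite !big_distrl.
rewrite e in h3.
apply: leq_trans (leq_trans (leq_mul (leq_mul h1 (leqnn _)) (leqnn _)) h3) _.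
rewrite !mulnA -!expnD leq_mul2r; apply/orP; right.
rewrite leq_exp2l //; lia.
Qed.

End Union.

Lemma key_ineq n m : 72 * n <= m -> 2 ^ (18 * n) * 302 ^ m <= 400 ^ m.
Proof.
move=> h.
have e1 : 400 ^ m = 5 ^ m * 80 ^ m by rewrite -expnMn.
have h1 : 302 ^ m <= 4 ^ m * 80 ^ m by rewrite -expnMn; apply: expn_mono.
rewrite e1; apply: leq_trans (leq_mul (leqnn _) h1) _.
rewrite mulnA leq_mul2r; apply/orP; right.
rewrite -(subnKC h) [5 ^ _]expnD [4 ^ _]expnD mulnA leq_mul //; last exact: expn_mono.
have -> : 72 * n = 4 * (18 * n) by lia.
rewrite [4 ^ _]expnM [5 ^ _]expnM -expnMn; exact: expn_mono.
Qed.

Lemma card_inst n m : #|{: Instance n m}| = #|{: Triple n}| ^ m * 2 ^ m.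
Proof. by rewrite /Instance card_prod !card_ffun card_ord card_bool. Qed.

Lemma bad_small n m : 72 * n <= m -> #|BadSet n m| * 2 ^ n <= #|{: Instance n m}|.
Proof.
move=> h; rewrite card_inst.
have hb := @bad_bound n m.
have hp : 0 < 2 ^ m * 100 ^ m by rewrite muln_gt0 !expn_gt0.
rewrite -(leq_pmul2r hp).
apply: leq_trans (_ : 2 ^ (17 * n) * (302 * #|{: Triple n}|) ^ m * 2 ^ n <= _).
  by rewrite mulnAC !mulnA leq_mul2r hb orbT.
rewrite expnMn.
have e2 : 2 ^ (17 * n) * 2 ^ n = 2 ^ (18 * n) by rewrite -expnD; congr (2 ^ _); lia.
have e3 : 2 ^ m * (2 ^ m * 100 ^ m) = 400 ^ m by rewrite -!expnMn.
have hk := key_ineq h.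
rewrite -e2 -e3 in hk.
move: hk; set A := 2 ^ (17 * n); set B := 302 ^ m; set C := #|{: Triple n}| ^ m;
  set D := 2 ^ n; set E := 2 ^ m; set F := 100 ^ m => hk.
Show.
rewrite (_ : A * (B * C) * D = A * D * B * C); last by ring.
rewrite (_ : C * E * (E * F) = E * (E * F) * C); last by ring.
exact: leq_mul hk (leqnn C).
Qed.

Import Order.TTheory GRing.Theory Num.Theory.
Local Open Scope ring_scope.

Lemma GI_bad (R : realType) n m (C : Instance n m) (d : R) :
  0 <= d < 1 -> (2 * n + 28 * m)%:R * d <= n%:R / 5 ->
  1 - d <= GI_inst R C -> C \in BadSet n m.
Proof.
case: C => T b /andP [d0 d1] hd.
rewrite /GI_inst /GI /=.
set EG := Edges (adjC T b); set EH := Edges (adjC T [ffun _ => false]).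
have hperm : (0 < #|{: {perm Vtx n m}}|)%N by apply/card_gt0P; exists 1%g.
have [pi hpi] := bigop.eq_bigmax (fun pi : {perm Vtx n m} =>
   #|[set e in EG | (pi @: e) \in EH]|) hperm.
rewrite hpi; set P := #|[set e in EG | (pi @: e) \in EH]|.
set E := maxn #|EG| #|EH|.
move=> hGI.
have hE : (0 < E)%N.
  rewrite lt0n; apply/negP => /eqP hE0; move: hGI; rewrite hE0 mulr0n invr0 mulr0.
  move=> h; lra.
have hEb : (E <= 2 * n + 28 * m)%N by rewrite geq_max !card_edges.
have hL : (#|Lam T b pi| + P = #|EG|)%N.
  rewrite -(cardsID [set e : {set Vtx n m} | (pi @: e) \in EH] EG) addnC; congr (_ + _)%N.
  - by apply: eq_card => e; rewrite !inE.
  - by apply: eq_card => e; rewrite !inE andbC.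
have hPE : (P <= E)%N by apply: leq_trans (leq_maxl _ _); rewrite -hL leq_addl.
have hM : (1 - d) * E%:R <= P%:R.
  have hER : 0 < E%:R :> R by rewrite ltr0n.
  by rewrite -ler_pdivlMr.
have h5 : (5 * #|Lam T b pi| <= n)%N.
  rewrite -(ler_nat R) natrM.
  have : #|Lam T b pi|%:R = #|EG|%:R - P%:R :> R by rewrite -hL natrD addrK.
  move=> ->.
  have h1 : #|EG|%:R <= E%:R :> R by rewrite ler_nat leq_maxl.
  have h2 : E%:R <= (2 * n + 28 * m)%:R :> R by rewrite ler_nat.
  have h3 : E%:R * d <= n%:R / 5 :> R.
    by apply: le_trans hd; rewrite ler_wpM2r.
  lra.
rewrite inE; apply/existsP; exists (sgm pi); apply/existsP; exists (Sx T pi).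
have hS := card_Sx T b pi; have hD := det_bound T b pi.
rewrite /goodc /=; apply/andP; split.
  exact: leq_trans (leq_mul (leqnn 5) hS) h5.
apply: leq_trans hD _. rewrite mulSn leq_add2r. apply: leq_trans _ h5. exact: leq_pmull.
Qed.

Unset Implicit Arguments.

Theorem lemma5p1 (R : realType) (c : R) :
  10 ^+ 10 <= c ->
  forall eps : R, 0 < eps ->
  exists N : nat, forall n : nat, (N <= n)%N ->
    let m := Num.truncn (c * n%:R) in
    1 - eps <=
      prob (fun C : Instance n m => GI_inst R C < 1 - (95 * c ^+ 2)^-1) R.
Proof.
move=> hc eps heps.
have c1 : 1 <= c by apply: le_trans hc; apply: exprn_ege1; lra.
exists (maxn 3 (Num.truncn (eps^-1)).+1) => n; rewrite geq_max => /andP [hn3 hnt].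
cbv zeta; set m := Num.truncn (c * n%:R).
have hn0 : (0 < n)%N by apply: leq_trans hn3.
have hnR : 1 <= n%:R :> R by rewrite ler1n.
have cn0 : 0 <= c * n%:R by apply: mulr_ge0; lra.
have hm1 : m%:R <= c * n%:R by rewrite /m truncn_le.
have hm2 : c * n%:R < m.+1%:R by rewrite -truncn_le_nat.
set d := (95 * c ^+ 2)^-1.
have hc2 : 0 < 95 * c ^+ 2 by apply: mulr_gt0; [lra | apply: exprn_gt0; lra].
have d0 : 0 < d by rewrite invr_gt0.
have dc : d * (95 * c ^+ 2) = 1 by rewrite mulVf // gt_eqF.
have d1 : d < 1.
  have : 95 <= 95 * c ^+ 2 by rewrite expr2; nra.
  move=> h; have : d * 95 <= 1 by rewrite -dc ler_wpM2l //; lra.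
  lra.
have hcn : n%:R <= c * n%:R by rewrite ler_peMl //; lra.
have hd : (2 * n + 28 * m)%:R * d <= n%:R / 5.
  rewrite natrD !natrM.
  have h1 : 2%:R * n%:R + 28%:R * m%:R <= 30 * (c * n%:R) :> R by lra.
  have hcd : 0 <= c * d by apply: mulr_ge0; lra.
  have k : 150 * (c * d) <= 1.
    rewrite -dc (_ : d * (95 * c ^+ 2) = (95 * c) * (c * d)); last by rewrite expr2; ring.
    by apply: (ler_wpM2r hcd); lra.
  have h2 : (30 * (c * n%:R)) * d <= n%:R / 5.
    rewrite (_ : 30 * (c * n%:R) * d = (30 * (c * d)) * n%:R); last by ring.
    rewrite (_ : n%:R / 5 = (1/5) * n%:R :> R); last by ring.
    by rewrite ler_pM2r; lra.
  by apply: le_trans h2; rewrite ler_wpM2r //; lra.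
have h72 : (72 * n <= m)%N.
  rewrite -(ler_nat R) natrM.
  have h8 : (1:R) <= 10 ^+ 8 by apply: exprn_ege1; lra.
  have h10 : (100:R) <= 10 ^+ 10 by rewrite exprS exprS; lra.
  have : 100 * n%:R <= c * n%:R by apply: (ler_wpM2r (ler0n _ _)); lra.
  move=> h; rewrite -natr1 in hm2; lra.
have hbad := bad_small h72.
set E := [set C : Instance n m | GI_inst R C < 1 - d].
have hsub : ~: E \subset BadSet n m.
  apply/subsetP => C hC; rewrite in_setC inE -leNgt in hC.
  by apply: (GI_bad (d := d)) => //; rewrite d1 ltW.
have hI : (0 < #|{: Instance n m}|)%N.
  by rewrite card_inst muln_gt0 !expn_gt0 card_triple bin_gt0 hn3.
have hEc := cardsC E.
rewrite /prob.
set I := #|{: Instance n m}| in hbad hI hEc *.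
set B := #|BadSet n m| in hbad.
have hcb : (#|~: E| <= B)%N by exact: subset_leq_card.
have hIR : 0 < I%:R :> R by rewrite ltr0n.
have hBI : B%:R * 2%:R ^+ n <= I%:R :> R by rewrite -natrX -natrM ler_nat.
have h2n : eps^-1 < 2%:R ^+ n :> R.
  have : eps^-1 < n%:R.
    have hie : 0 <= eps^-1 by rewrite invr_ge0; lra.
    by rewrite -(truncn_lt_nat _ hie).
  move=> h; apply: lt_le_trans h _; rewrite -natrX ler_nat; exact: ltnW (ltn_expl _ _).
change (1 - eps <= #|E|%:R / I%:R).
set K := #|~: E| in hEc hcb *.
have hEI : #|E|%:R = I%:R - K%:R :> R by rewrite -hEc natrD addrK.
set X : R := 2%:R ^+ n in hBI h2n.
have hX : 0 <= X by rewrite /X exprn_ge0 // ler0n.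
have he1 : 1 <= X * eps.
  have := ler_wpM2r (ltW heps) (ltW h2n); rewrite mulVf ?gt_eqF //.
have hKX : K%:R * X <= I%:R.
  apply: le_trans hBI; apply: (ler_wpM2r hX); by rewrite ler_nat.
have hK : K%:R <= I%:R * eps.
  apply: le_trans (_ : K%:R * (X * eps) <= _).
    by apply: ler_peMr => //; rewrite ler0n.
  rewrite mulrA; exact: (ler_wpM2r (ltW heps)).
rewrite hEI ler_pdivlMr //; lra.
Qed.
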